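(* Fix an $s \times t$ matrix $A$ and let $\tilde{A}$ be its folding, of dimensions $s' \times t'$. There exist polynomials $p_1,p_2$ (depending only on $A$) such that for every $\epsilon > 0$, with $n_0 = p_1(\epsilon^{-1})$ and $\delta = 1/p_2(\epsilon^{-1})$, for every $n \geq n_0$, every $n \times n$ matrix $M$ that contains $\epsilon n^{s'+t'}$ copies of $\tilde{A}$ also contains $\delta n^{s+t}$ copies of $A$.
   Context: Matrices are over a fixed finite alphabet, with ordered rows and columns. A submatrix is obtained by deleting rows and columns while preserving order; a copy of a matrix $B$ in $M$ is a submatrix of $M$ equal to $B$. The predecessor of a row is the row immediately preceding it. The folding $\tilde{A}$ of $A$ is the matrix obtained from $A$ by deleting every row of $A$ that is equal to its predecessor, and then deleting every column of the resulting matrix that is equal to its predecessor (in that matrix). *)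

(* Defs.v *)
From mathcomp Require Import all_boot all_order all_algebra.
From mathcomp Require Import reals.
Set Implicit Arguments. Unset Strict Implicit. Unset Printing Implicit Defensive.
Import Order.TTheory GRing.Theory Num.Theory.

Definition row_keep (S : finType) (m n : nat) (A : 'M[S]_(m, n)) : {set 'I_m} :=
  [set i : 'I_m | (nat_of_ord i == 0) ||
     [exists j : 'I_m, (j.+1 == nat_of_ord i) && (row j A != row i A)]].

Definition del_dup_rows (S : finType) (m n : nat) (A : 'M[S]_(m, n))
  : 'M[S]_(#|row_keep A|, n) :=
  \matrix_(i, j) A (enum_val i) j.

Definition frows (S : finType) (m n : nat) (A : 'M[S]_(m, n)) : nat :=
  #|row_keep A|.
Definition fcols (S : finType) (m n : nat) (A : 'M[S]_(m, n)) : nat :=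
  #|row_keep (del_dup_rows A)^T|.

(* The folding: first delete repeated rows, then delete every column of the
   resulting matrix equal to its predecessor. *)
Definition folding (S : finType) (m n : nat) (A : 'M[S]_(m, n))
  : 'M[S]_(frows A, fcols A) :=
  (del_dup_rows (del_dup_rows A)^T)^T.

Definition strict_incr (p n : nat) (f : {ffun 'I_p -> 'I_n}) : bool :=
  [forall i : 'I_p, forall j : 'I_p, (i < j)%N ==> (f i < f j)%N].

(* Number of copies of B in M: number of choices of p rows and q columns of M
   (each chosen as an increasing sequence of indices, i.e. a set of indices)
   whose submatrix equals B. *)
Definition ncopies (S : finType) (p q m n : nat) (B : 'M[S]_(p, q))
  (M : 'M[S]_(m, n)) : nat :=
  #|[set fg : {ffun 'I_p -> 'I_m} * {ffun 'I_q -> 'I_n} |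
     [&& strict_incr fg.1, strict_incr fg.2 &
         [forall i, forall j, M (fg.1 i) (fg.2 j) == B i j]]]|.

(* Main.v *)
Require Import Defs.
From mathcomp Require Import all_boot all_order all_algebra.
From mathcomp Require Import reals.
From mathcomp Require Import zify ring lra.
Import Order.TTheory GRing.Theory Num.Theory.
Set Implicit Arguments. Unset Strict Implicit. Unset Printing Implicit Defensive.

Definition iscopy (S : finType) p q m n (B : 'M[S]_(p,q)) (M : 'M[S]_(m,n))
  (fg : {ffun 'I_p -> 'I_m} * {ffun 'I_q -> 'I_n}) : bool :=
  [&& strict_incr fg.1, strict_incr fg.2 &
         [forall i, forall j, M (fg.1 i) (fg.2 j) == B i j]].

Lemma ncopiesE (S : finType) p q m n (B : 'M[S]_(p,q)) (M : 'M[S]_(m,n)) :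
  ncopies B M = #|[set fg | iscopy B M fg]|.
Proof. by []. Qed.

Lemma strict_incrP p n (f : {ffun 'I_p -> 'I_n}) :
  reflect (forall i j : 'I_p, (i < j)%N -> (f i < f j)%N) (strict_incr f).
Proof.
apply: (iffP forallP) => [H i j lij|H i]; last by apply/forallP => j; apply/implyP; apply: H.
by have /forallP/(_ j)/implyP := H i; apply.
Qed.

Lemma strict_incr_le p n (f : {ffun 'I_p -> 'I_n}) (i j : 'I_p) :
  strict_incr f -> (i <= j)%N -> (f i <= f j)%N.
Proof.
move=> /strict_incrP H; rewrite leq_eqVlt => /orP[/eqP e|/H/ltnW //].
by have -> : i = j by apply: val_inj.
Qed.

Lemma cs_nat (C : finType) (d : C -> nat) :
  ((\sum_c d c) ^ 2 <= #|C| * \sum_c (d c)^2)%N.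
Proof.
suff H : (2 * (\sum_c d c)^2 <= 2 * (#|C| * \sum_c (d c)^2))%N by rewrite leq_pmul2l in H.
rewrite -mulnn big_distrl /= big_distrr /=.
apply: (@leq_trans (\sum_a \sum_b (d a ^ 2 + d b ^ 2))%N).
  apply: leq_sum => a _; rewrite big_distrr big_distrr /=.
  apply: leq_sum => b _; rewrite -!mulnn; move: (d a) (d b) => x y; case: (leqP x y) => h; [have [z ->] : exists z, y = x + z by exists (y - x); lia| have [z ->] : exists z, x = y + z by exists (x - y); lia]; nia.
rewrite (eq_bigr (fun a => #|C| * d a ^ 2 + \sum_b d b ^ 2)%N); last first.
  by move=> a _; rewrite big_split /= sum_nat_const.
rewrite big_split /= sum_nat_const -big_distrr /= (_ : #|xpredT| = #|C|) //; lia.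
Qed.
Lemma ncopies_tr (S : finType) p q m n (B : 'M[S]_(p,q)) (M : 'M[S]_(m,n)) :
  ncopies B^T M^T = ncopies B M.
Proof.
rewrite !ncopiesE.
have -> : [set fg | iscopy B^T M^T fg] =
   [set (fg.2, fg.1) | fg in [set fg | iscopy B M fg]].
  apply/setP => -[f g]; rewrite inE; apply/idP/imsetP.
  - case/and3P => sf sg /forallP H; exists (g, f) => //.
    rewrite inE /iscopy /= sf sg /=; apply/forallP => i; apply/forallP => j.
    by have /forallP/(_ i)/eqP := H j; rewrite !mxE => ->.
  - case=> -[f' g'] /=; rewrite inE => /and3P [sf sg /forallP H] [-> ->].
    rewrite /iscopy /= sf sg /=; apply/forallP => i; apply/forallP => j.
    by have /forallP/(_ i)/eqP := H j; rewrite !mxE => ->.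
apply: card_imset => -[? ?] [? ?] /= [-> ->] //.
Qed.

Definition dupo p (k : 'I_p.+1) (i : 'I_p.+2) : 'I_p.+1 :=
  inord (if (i <= k)%N then (i : nat) else i.-1).

Lemma dupoE p (k : 'I_p.+1) (i : 'I_p.+2) :
  (dupo k i : nat) = if (i <= k)%N then (i : nat) else i.-1.
Proof.
rewrite inordK //; case: ifP => h; first exact: leq_ltn_trans h (ltn_ord k).
have := ltn_ord i; lia.
Qed.

Definition rowdup (S : finType) p q (k : 'I_p.+1) (B : 'M[S]_(p.+1,q)) : 'M[S]_(p.+2,q) :=
  \matrix_(i,j) B (dupo k i) j.

Definition ctx p q m n (k : 'I_p.+1) (fg : {ffun 'I_p.+1 -> 'I_m} * {ffun 'I_q -> 'I_n}) :
   {ffun 'I_p -> 'I_m} * {ffun 'I_q -> 'I_n} := ([ffun i => fg.1 (lift k i)], fg.2).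

Lemma ctx_eq p q m n (k : 'I_p.+1) f g f2 g2 :
  @ctx p q m n k (f, g) = ctx k (f2, g2) -> g = g2 /\ forall z, z != k -> f z = f2 z.
Proof.
case=> Hf ->; split=> // z; case: (unliftP k z) => [j ->|->]; last by rewrite eqxx.
by move=> _; have := congr1 (fun h : {ffun 'I_p -> 'I_m} => h j) Hf; rewrite !ffunE.
Qed.

Definition emb p (k : 'I_p.+1) (z : 'I_p.+1) : 'I_p.+2 :=
  inord (if (z <= k)%N then (z : nat) else z.+1).

Lemma embE p (k : 'I_p.+1) z : (emb k z : nat) = if (z <= k)%N then (z : nat) else z.+1.
Proof. rewrite inordK //; have := ltn_ord z; case: ifP; lia. Qed.

Lemma dupo_emb p (k : 'I_p.+1) z : dupo k (emb k z) = z.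
Proof. apply: val_inj; rewrite /= dupoE embE; case: (leqP z k) => h; [by rewrite h | case: ifP => ?; lia]. Qed.

Lemma cardU_le (T : finType) (A B : {set T}) : (#|A :|: B| <= #|A| + #|B|)%N.
Proof. by rewrite cardsU leq_subr. Qed.

Lemma step_count (S : finType) p q m n (k : 'I_p.+1) (B : 'M[S]_(p.+1,q)) (M : 'M[S]_(m,n)) :
  (ncopies B M ^ 2 <= m ^ p * n ^ q * (2 * ncopies (rowdup k B) M + ncopies B M))%N.
Proof.
rewrite !ncopiesE.
set X := [set fg | iscopy B M fg].
set Q := [set xy | [&& xy.1 \in X, xy.2 \in X & ctx k xy.1 == ctx k xy.2]].
set L := [set xy | (xy \in Q) && (xy.1.1 k < xy.2.1 k)%N].
set d := fun c => #|[set x in X | ctx k x == c]|.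
have cX : #|X| = (\sum_c d c)%N.
  rewrite -sum1_card (partition_big (ctx k) predT) //=.
  by apply: eq_bigr => c _; rewrite sum1dep_card.
have cQ : #|Q| = (\sum_c d c ^ 2)%N.
  rewrite -sum1_card (partition_big (fun xy => ctx k xy.1) predT) //=.
  apply: eq_bigr => c _; rewrite sum1dep_card -mulnn -cardsX.
  apply: eq_card => -[x y]; rewrite !inE /=.
  case: (ctx k x =P c) => [->|nx];
    case: (ctx k y =P c) => [->|ny]; rewrite ?eqxx ?andbF ?andbT //.
  rewrite (_ : (c == ctx k y) = false) ?andbF //; apply/eqP => e; apply: ny; by rewrite e.
have cs : (#|X|^2 <= m^p * n^q * #|Q|)%N.
  rewrite cX cQ; apply: leq_trans (cs_nat d) _.
  by rewrite card_prod !card_ffun !card_ord.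
have inj : forall x y : {ffun 'I_p.+1 -> 'I_m} * {ffun 'I_q -> 'I_n}, ctx k x = ctx k y -> x.1 k = y.1 k -> x = y.
  move=> [f g] [f2 g2] cxy /= e; case: (ctx_eq cxy) => eg H; rewrite eg; congr pair; apply/ffunP => z.
  by case: (z =P k) => [->//|/eqP]; exact: H.
have QL : (#|Q| <= #|X| + 2 * #|L|)%N.
  have sub : Q \subset [set (x, x) | x in X] :|: L :|: [set (xy.2, xy.1) | xy in L].
    apply/subsetP => -[x y] xyQ; have := xyQ; rewrite inE /= => /and3P[xX yX /eqP cxy].
    case: (ltngtP (x.1 k) (y.1 k)) => h.
    - by apply/setUP; left; apply/setUP; right; rewrite inE xyQ h.
    - apply/setUP; right; apply/imsetP; exists (y, x) => //.
      by rewrite inE h andbT inE /= yX xX eq_sym; apply/eqP.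
    - apply/setUP; left; apply/setUP; left; apply/imsetP; exists x => //.
      by rewrite (inj x y cxy (val_inj h)).
  apply: leq_trans (subset_leq_card sub) _.
  apply: leq_trans (cardU_le _ _) _.
  have h1 := cardU_le [set (x, x) | x in X] L.
  have h2 := leq_imset_card (fun x => (x, x)) X.
  have h3 := leq_imset_card (fun xy : _ * _ => (xy.2, xy.1)) L.
  apply: leq_trans (leq_add (leq_trans h1 (leq_add h2 (leqnn _))) h3) _; lia.
pose phi (xy : ({ffun 'I_p.+1 -> 'I_m} * {ffun 'I_q -> 'I_n}) *
               ({ffun 'I_p.+1 -> 'I_m} * {ffun 'I_q -> 'I_n})) :=
  ([ffun i : 'I_p.+2 => if (i == k.+1 :> nat) then xy.2.1 k else xy.1.1 (dupo k i)], xy.1.2).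
have LC : (#|L| <= #|[set fg | iscopy (rowdup k B) M fg]|)%N.
  rewrite -(@card_in_imset _ _ phi).
    apply: subset_leq_card; apply/subsetP => _ /imsetP[[[f g] [f2 g2]] xyL ->].
    move: xyL; rewrite !inE /= => /andP[/and3P[xX yX /eqP cxy] lt].
    move: xX yX; rewrite /iscopy /= => /and3P[sf sg /forallP Ex] /and3P[sf2 sg2 /forallP Ey].
    case: (ctx_eq cxy) => eg H.
    apply/and3P; split => //.
    - apply/strict_incrP => i j lij; rewrite !ffunE.
      case: eqP => ei; case: eqP => ej.
      + lia.
      + rewrite (H (dupo k j)); last first.
          by apply/eqP => e; have := dupoE k j; rewrite e; case: ifP; lia.
        by apply: (strict_incrP _ sf2); rewrite dupoE; case: ifP; lia.
      + apply: leq_ltn_trans (strict_incr_le sf _) lt.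
        by rewrite dupoE; case: ifP; lia.
      + by apply: (strict_incrP _ sf); rewrite !dupoE; case: ifP; case: ifP; lia.
    - apply/forallP => i; apply/forallP => j; rewrite !ffunE mxE; case: ifP => /eqP ei.
      + have -> : dupo k i = k by apply: val_inj; rewrite /= dupoE ei ltnn.
        by rewrite eg; have /forallP := Ey k; apply.
      + by have /forallP := Ex (dupo k i); apply.
  move=> [[f g] [f2 g2]] [[f' g'] [f2' g2']] hL hL' e.
  move: hL hL'; rewrite !inE /= => /andP[/and3P[_ _ /eqP cxy] _] /andP[/and3P[_ _ /eqP cxy'] _].
  case: (ctx_eq cxy) => eg H; case: (ctx_eq cxy') => eg' H'.
  case: e => eF egg.
  have ef : f = f'.
    apply/ffunP => z.
    have := congr1 (fun h : {ffun 'I_p.+2 -> 'I_m} => h (emb k z)) eF; rewrite !ffunE.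
    rewrite dupo_emb embE (_ : ((if (z <= k)%N then (z:nat) else z.+1) == k.+1) = false) //; case: ifP => hz; apply/eqP; lia.
  have ef2 : f2 = f2'.
    apply/ffunP => z; case: (z =P k) => [->|/eqP nz].
      have := congr1 (fun h : {ffun 'I_p.+2 -> 'I_m} => h (inord k.+1)) eF.
      by rewrite !ffunE inordK ?eqxx //= ltnS.
    by rewrite -H // -H' // ef.
  by rewrite ef ef2 -eg -eg' egg.
rewrite (leq_trans cs) // leq_mul2l; apply/orP; right; lia.
Qed.

Local Open Scope ring_scope.

Definition good (R : realType) (S : finType) p0 q0 (B : 'M[S]_(p0,q0)) p q (A : 'M[S]_(p,q)) : Prop :=
  exists p1 p2 : {poly R},
    (forall eps : R, 0 < eps -> 0 < p2.[eps^-1]) /\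
    forall eps : R, 0 < eps ->
    forall n : nat, p1.[eps^-1] <= n%:R ->
    forall M : 'M[S]_n,
      eps * n%:R ^+ (p0 + q0) <= (ncopies B M)%:R ->
      (p2.[eps^-1])^-1 * n%:R ^+ (p + q) <= (ncopies A M)%:R.

Lemma good_refl (R : realType) (S : finType) p q (B : 'M[S]_(p,q)) : good R B B.
Proof.
exists 0, 'X; split=> [eps e0|eps e0 n _ M]; rewrite hornerX ?invr_gt0 // invrK //.
Qed.

Lemma good_trans (R : realType) (S : finType) p0 q0 p1 q1 p q (B : 'M[S]_(p0,q0))
  (A1 : 'M[S]_(p1,q1)) (A : 'M[S]_(p,q)) :
  good R B A1 -> good R A1 A -> good R B A.
Proof.
move=> [a1 [a2 [a2p Ha]]] [b1 [b2 [b2p Hb]]].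
exists (a1 ^+ 2 + (b1 \Po a2) ^+ 2 + 1), (b2 \Po a2); split.
  move=> eps e0; rewrite horner_comp.
  have := b2p ((a2.[eps^-1])^-1); rewrite invrK; apply; rewrite invr_gt0; exact: a2p.
move=> eps e0 n hn M hB.
have hn1 : a1.[eps^-1] <= n%:R.
  move: hn; rewrite !hornerE /= => hn; nra.
have hn2 : b1.[a2.[eps^-1]] <= n%:R.
  move: hn; rewrite !hornerE /= horner_comp => hn; nra.
have h1 := Ha eps e0 n hn1 M hB.
have e1 : 0 < (a2.[eps^-1])^-1 by rewrite invr_gt0; exact: a2p.
have := Hb _ e1 n; rewrite invrK => /(_ hn2 M h1).
by rewrite horner_comp.
Qed.

Lemma good_tr (R : realType) (S : finType) p0 q0 p q (B : 'M[S]_(p0,q0)) (A : 'M[S]_(p,q)) :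
  good R B A -> good R B^T A^T.
Proof.
move=> [a1 [a2 [a2p Ha]]]; exists a1, a2; split => // eps e0 n hn M.
rewrite -(trmxK M) !ncopies_tr addnC [(q + p)%N]addnC; exact: Ha.
Qed.

Lemma good_rowdup (R : realType) (S : finType) p q (k : 'I_p.+1) (B : 'M[S]_(p.+1,q)) :
  good R B (rowdup k B).
Proof.
exists (2%:P * 'X), (4%:P * 'X ^+ 2); split.
  move=> eps e0; have ie : 0 < eps^-1 by rewrite invr_gt0.
  rewrite !(hornerM, hornerC, hornerX, horner_exp); nra.
move=> eps e0 n; rewrite !(hornerM, hornerC, hornerX, horner_exp) => hn M hB.
have H := step_count k B M.
rewrite -(ler_nat R) !natrM !natrX !natrD ?natrM in H.
set c := (ncopies B M)%:R in hB H *.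
set c' := (ncopies (rowdup k B) M)%:R in H *.
set x := (n%:R : R) in hn hB H *.
have x0 : 0 < x by apply: lt_le_trans hn; apply: mulr_gt0 => //; rewrite invr_gt0.
set N := x ^+ (p + q).
have N0 : 0 < N by apply: exprn_gt0.
have c'0 : 0 <= c' by apply: ler0n.
have exs : x ^+ p * x ^+ q = N by rewrite /N exprD.
rewrite exs in H.
have hx : 2 <= eps * x.
  have : eps * (2 * eps^-1) = 2 by rewrite mulrCA mulfV ?mulr1 // gt_eqF.
  move=> e2; rewrite -e2; apply: ler_wpM2l => //; exact: ltW.
have eB : eps * x * N <= c by move: hB; rewrite addSn exprS /N mulrA.
rewrite addSn addSn !exprS -/N.
have e1 : 2 * N <= c by nra.
have e2 : c * c <= N * (4 * c') by nra.
have e3 : (eps * x * N) * (eps * x * N) <= c * c.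
  apply: ler_pM => //; by apply: mulr_ge0 => //; [apply: mulr_ge0; apply: ltW|apply: ltW].
have e4 : eps * x * (eps * x) * N <= 4 * c'.
  rewrite -(ler_pM2l N0); nra.
have ee : (4 * (eps^-1 / eps))^-1 = eps * eps / 4.
  by field; rewrite gt_eqF.
rewrite ee; nra.
Qed.

Local Close Scope ring_scope.

Lemma good_base (R : realType) (S : finType) m t (D : 'M[S]_(m,t)) s (sg : 'I_s -> 'I_m) :
  (forall i j : 'I_s, (i <= j)%N -> (sg i <= sg j)%N) -> (forall r, exists i, sg i = r) ->
  (forall i j : 'I_s, (j : nat) = i.+1 -> sg i != sg j) ->
  good R D (\matrix_(i < s, j < t) D (sg i) j).
Proof.
move=> mono surj adj.
have adj' : forall i j : 'I_s, (j : nat) = i.+1 -> (sg i < sg j)%N.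
  move=> i j e; rewrite ltn_neqAle mono ?e // andbT.
  by apply/eqP => /val_inj; apply/eqP/adj.
have lo0 : forall k (i : 'I_s), (i : nat) = k -> (i <= sg i)%N.
  elim=> [|k IHk] i ei; first by rewrite ei.
  have ik : (k < s)%N by have := ltn_ord i; lia.
  have := adj' (Ordinal ik) i ei; have := IHk (Ordinal ik) erefl; rewrite ei /=; lia.
have lo : forall i : 'I_s, (i <= sg i)%N by move=> i; exact: lo0.
have idk : forall k (i : 'I_s), (i < k)%N -> (sg i : nat) = i.
  elim=> [//|k IHk] i; rewrite ltnS leq_eqVlt => /orP[/eqP ei|]; last exact: IHk.
  apply/eqP; rewrite eqn_leq lo andbT; rewrite leqNgt; apply/negP => lt.
  have km : (k < m)%N by have := ltn_ord (sg i); lia.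
  have [z ez] := surj (Ordinal km).
  case: (ltnP z i) => zi.
    by have := IHk z (leq_trans zi (eq_leq ei)); rewrite ez /=; lia.
  by have := mono _ _ zi; rewrite ez /=; lia.
have id : forall i : 'I_s, (sg i : nat) = i by move=> i; exact: (idk s.+1 i (ltnW (ltn_ord i))).
have esm : s = m.
  apply/eqP; rewrite eqn_leq; apply/andP; split.
    case: (posnP s) => [->//|s0].
    have ls : (s.-1 < s)%N by lia.
    by have := id (Ordinal ls); have := ltn_ord (sg (Ordinal ls)); simpl; lia.
  case: (posnP m) => [->//|m0].
  have lm : (m.-1 < m)%N by lia.
  by have [z ez] := surj (Ordinal lm); have := id z; rewrite ez /=; have := ltn_ord z; lia.
subst s.
have -> : (\matrix_(i < m, j < t) D (sg i) j)%R = D.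
  by apply/matrixP => i j; rewrite mxE; congr (D _ j); apply: val_inj; rewrite /= id.
exact: good_refl.
Qed.

Lemma emb_dupo p (k : 'I_p.+1) (a : 'I_p.+2) : (a : nat) != k.+1 -> emb k (dupo k a) = a.
Proof.
move=> /eqP ne; apply: val_inj; rewrite /= embE dupoE.
case: (leqP a k) => h; first by rewrite h.
have := ltn_ord a; case: ifP => ?; lia.
Qed.

Lemma good_sigma (R : realType) (S : finType) m t (D : 'M[S]_(m,t)) s (sg : 'I_s -> 'I_m) :
  (forall i j : 'I_s, (i <= j)%N -> (sg i <= sg j)%N) -> (forall r, exists i, sg i = r) ->
  good R D (\matrix_(i < s, j < t) D (sg i) j).
Proof.
elim: s sg => [|s IH] sg mono surj.
  by apply: good_base => // -[].
case: (boolP [exists i : 'I_s.+1, exists j : 'I_s.+1, (j == i.+1 :> nat) && (sg i == sg j)]); last first.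
  move=> /existsPn H; apply: good_base => // i j e; apply/negP => E.
  by have /existsPn/(_ j) := H i; rewrite e eqxx E.
case/existsP => i /existsP[j /andP[/eqP eji /eqP eij]].
case: s IH sg mono surj i j eji eij => [|p] IH sg mono surj i j eji eij.
  by have := ltn_ord j; rewrite eji.
have ik : (i < p.+1)%N by have := ltn_ord j; lia.
pose k : 'I_p.+1 := Ordinal ik.
pose sg' := fun x : 'I_p.+1 => sg (emb k x).
have mono' : forall a b : 'I_p.+1, (a <= b)%N -> (sg' a <= sg' b)%N.
  move=> a b ab; apply: mono; rewrite !embE; case: ifP; case: ifP; lia.
have ekk : emb k k = i by apply: val_inj; rewrite /= embE leqnn.
have surj' : forall r, exists x, sg' x = r.
  move=> r; have [z ez] := surj r.
  case: (eqVneq (z : nat) k.+1) => hz.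
    exists k; rewrite /sg' ekk eij -ez; congr (sg _); apply: val_inj; rewrite /= hz eji.
    by [].
  by exists (dupo k z); rewrite /sg' emb_dupo.
have -> : (\matrix_(i0 < p.+2, j0 < t) D (sg i0) j0)%R =
          rowdup k (\matrix_(i0 < p.+1, j0 < t) D (sg' i0) j0)%R.
  apply/matrixP => a b; rewrite !mxE /sg'.
  case: (eqVneq (a : nat) k.+1) => ha; last by rewrite emb_dupo.
  have -> : dupo k a = k by apply: val_inj; rewrite /= dupoE ha ltnn.
  rewrite ekk eij; congr (D (sg _) b); apply: val_inj; rewrite /= ha eji.
  by [].
have h1 := IH sg' mono' surj'.
have h2 := good_rowdup R k (\matrix_(i0 < p.+1, j0 < t) D (sg' i0) j0)%R.
exact: good_trans h1 h2.
Qed.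

Lemma sorted_enum_set s (K : {set 'I_s}) : sorted (fun x y : 'I_s => (x < y)%N) (enum K).
Proof.
have tr : transitive (fun x y : 'I_s => (x < y)%N) by move=> ? ? ?; exact: ltn_trans.
rewrite -deprecated_filter_index_enum; apply: sorted_filter => //.
have e := deprecated_filter_index_enum (T := 'I_s) predT; rewrite filter_predT in e.
rewrite e; have := iota_ltn_sorted 0 s; rewrite -(val_enum_ord s) sorted_map.
by move=> H; exact: H.
Qed.

Lemma enum_val_lt s (K : {set 'I_s}) (r r' : 'I_#|K|) :
  (r < r')%N -> (enum_val r < enum_val r')%N.
Proof.
move=> h; rewrite /enum_val.
have tr : transitive (fun x y : 'I_s => (x < y)%N) by move=> ? ? ?; exact: ltn_trans.
have := sorted_ltn_nth tr (enum_default r) (sorted_enum_set K).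
rewrite [nth (enum_default r') _ _](set_nth_default (enum_default r)); last by rewrite -cardE ltn_ord.
apply => //; rewrite ?inE -?cardE ?ltn_ord //.
Qed.

Lemma good_del (R : realType) (S : finType) s t (A : 'M[S]_(s,t)) :
  good R (del_dup_rows A) A.
Proof.
set K := row_keep A.
pose z (i : 'I_s) : 'I_s := Ordinal (leq_ltn_trans (leq0n i) (ltn_ord i)).
have zk : forall i, z i \in K by move=> i; rewrite inE eqxx.
pose lk (i : 'I_s) := [arg max_(k > z i | (k \in K) && (k <= i)%N) (k : nat)].
have lkP : forall i, [/\ lk i \in K, (lk i <= i)%N &
                        forall k, k \in K -> (k <= i)%N -> (k <= lk i)%N].
  move=> i; rewrite /lk; case: arg_maxnP; first by rewrite zk.
  move=> k /andP[kK ki] H; split=> // k' k'K k'i; apply: H; by rewrite k'K k'i.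
have lkK : forall i, i \in K -> lk i = i.
  move=> i iK; have [_ h1 h2] := lkP i; apply: val_inj; apply/eqP.
  by rewrite eqn_leq h1 h2.
have rowlk : forall n (i : 'I_s), (i : nat) = n -> row i A = row (lk i) A.
  elim/ltn_ind => n IHn i ein.
  case: (boolP (i \in K)) => iK; first by rewrite lkK.
  have := iK; rewrite inE negb_or => /andP[i0 /existsPn H].
  have ij : (i.-1 < s)%N by have := ltn_ord i; lia.
  pose j := Ordinal ij.
  have ej : j.+1 == i by apply/eqP; rewrite /= prednK // lt0n.
  have rj : row j A = row i A by move: (H j); rewrite ej /= negbK => /eqP.
  have lkj : lk j = lk i.
    have [a1 a2 a3] := lkP i; have [b1 b2 b3] := lkP j.
    apply: val_inj; apply/eqP; rewrite eqn_leq; apply/andP; split.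
      by apply: a3 => //; apply: leq_trans b2 _; rewrite /= leq_pred.
    apply: b3 => //; have : lk i != i by apply/eqP => e; move: a1; rewrite e (negbTE iK).
    move=> ne; have ne' : (lk i : nat) <> i by move=> e; move/eqP: ne; apply; apply: val_inj.
    rewrite /=; have := ltn_ord i; lia.
  by rewrite -rj -lkj (IHn j) //= ein; have := ltn_ord i; lia.
pose sg (i : 'I_s) : 'I_#|K| := enum_rank_in (zk i) (lk i).
have sgE : forall i, enum_val (sg i) = lk i.
  by move=> i; rewrite /sg enum_rankK_in //; case: (lkP i).
have mono : forall i j : 'I_s, (i <= j)%N -> (sg i <= sg j)%N.
  move=> i j ij; rewrite leqNgt; apply/negP => /(enum_val_lt (K := K)).
  rewrite !sgE; have [a1 a2 a3] := lkP i; have [b1 b2 b3] := lkP j.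
  have := a3 (lk i) a1 a2; have := b3 (lk i) a1 (leq_trans a2 ij); lia.
have surj : forall r, exists i, sg i = r.
  move=> r; exists (enum_val r); rewrite /sg lkK ?enum_valK_in //; exact: enum_valP.
have eA : A = (\matrix_(i < s, j < t) (del_dup_rows A) (sg i) j)%R.
  apply/matrixP => i j; rewrite !mxE sgE.
  by have := congr1 (fun r : 'M[S]_(1,t) => r ord0 j) (rowlk i i erefl); rewrite !mxE.
have G := good_sigma R (del_dup_rows A) mono surj.
by rewrite -eA in G.
Qed.

Local Open Scope ring_scope.

Theorem lemma3p1 (R : realType) (S : finType) (s t : nat) (A : 'M[S]_(s, t)) :
  exists p1 p2 : {poly R},
    (forall eps : R, 0 < eps -> 0 < p2.[eps^-1]) /\
    forall eps : R, 0 < eps ->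
    forall n : nat, p1.[eps^-1] <= n%:R ->
    forall M : 'M[S]_n,
      eps * n%:R ^+ (frows A + fcols A) <= (ncopies (folding A) M)%:R ->
      (p2.[eps^-1])^-1 * n%:R ^+ (s + t) <= (ncopies A M)%:R.
Proof.
have h1 := good_del R A.
have h2 := good_tr (good_del R (del_dup_rows A)^T).
rewrite trmxK in h2.
exact: (good_trans h2 h1).
Qed.
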